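(* $\mathfrak{L}(V)=\mathfrak{L}^-(V)$ if and only if $p_{ii}^2=1$ for all $i$ and $p_{ij}=p_{ji}=1$ for all $1\le i\neq j\le n$. In this case $\mathfrak{L}(V)=\mathfrak{L}^-(V)=V$.
   Context: $V$ is a braided vector space of diagonal type over an algebraically closed field $F$ of characteristic $0$ with basis $x_1,\dots,x_n$, braiding $C(x_i\otimes x_j)=q_{ij}x_j\otimes x_i$, Nichols algebra $\mathfrak{B}(V)$ ($\mathbb{Z}^n$-graded, $\deg x_i=e_i$); $\chi(e_i,e_j)=q_{ij}$, $p_{ij}:=q_{ij}$, $p_{uv}:=\chi(\deg u,\deg v)$. For homogeneous $x,y$, $[x,y]:=yx-p_{yx}xy$; $\mathfrak{L}(V)$ is the linear span in $\mathfrak{B}(V)$ of all iterated brackets $[\,,\,]$ (any bracketing) of $x_1,\dots,x_n$. The Nichols Lie algebra $\mathfrak{L}^-(V)$ is the Lie subalgebra of $\mathfrak{B}(V)$ generated by $V$ under the commutator $[a,b]^-=ab-ba$ (i.e. the span of all iterated commutators of $x_1,\dots,x_n$). *)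

(* Defs.v *)
From HB Require Import structures.
From mathcomp Require Import all_boot all_order all_algebra all_fingroup.
Set Implicit Arguments. Unset Strict Implicit. Unset Printing Implicit Defensive.
Import GRing.Theory.
Local Open Scope ring_scope.

(* Tensor algebra T(V) of V = F x_1 + ... + F x_n (basis indexed by 'I_n):
   an element is given by its coefficient on each word (seq 'I_n);
   the word [:: i1; ...; im] stands for x_{i1} ... x_{im}.  (Functions of
   arbitrary support = completion of T(V); all elements actually built below
   have finite support, and everything is defined coefficientwise.) *)
Definition tv (n : nat) (F : Type) := seq 'I_n -> F.

Section TensorAlg.
Variables (F : fieldType) (n : nat).

Definition tgen (i : 'I_n) : tv n F := fun w => (w == [:: i])%:R.

Definition tadd (f g : tv n F) : tv n F := fun w => f w + g w.
Definition tscale (c : F) (f : tv n F) : tv n F := fun w => c * f w.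
Definition tsub (f g : tv n F) : tv n F := fun w => f w - g w.
Definition tmul (f g : tv n F) : tv n F :=
  fun w => \sum_(k < (size w).+1) f (take k w) * g (drop k w).

Variable q : 'I_n -> 'I_n -> F.  (* braiding matrix, c(x_i (x) x_j) = q i j x_j (x) x_i *)

(* chi(deg u, deg v) for u, v with multisets of letters s, t *)
Definition chi (s t : seq 'I_n) : F := \prod_(i <- s) \prod_(j <- t) q i j.

(* Quantum symmetrizer Omega = sum_{sigma in S_m} T_sigma on degree m,
   T_sigma the Matsumoto lift of sigma to the braid group acting via c.
   For a word w, T_sigma(w) = (prod_{a<b, sigma a > sigma b} q w_a w_b) * v
   where v_(sigma a) = w_a. *)
Definition Omega (f : tv n F) : tv n F :=
  fun v =>
    let t := in_tuple v in
    \sum_(s : 'S_(size v))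
      let wl := fun a : 'I_(size v) => tnth t (s a) in
      (\prod_(a : 'I_(size v)) \prod_(b : 'I_(size v) | (a < b)%N && (s b < s a)%N)
          q (wl a) (wl b))
      * f [seq wl a | a <- enum 'I_(size v)].

(* The Nichols algebra B(V) = T(V)/ker Omega.  Two elements of T(V) have the
   same image in B(V) iff their Omega's agree. *)
Definition Beq (f g : tv n F) : Prop := forall w, Omega f w = Omega g w.

Definition tspan (P : tv n F -> Prop) (f : tv n F) : Prop :=
  exists m (c : 'I_m -> F) (g : 'I_m -> tv n F),
    (forall k, P (g k)) /\ forall w, f w = \sum_(k < m) c k * g k w.

(* image in B(V) of the span of P, as a predicate on representatives *)
Definition Bspan (P : tv n F -> Prop) (f : tv n F) : Prop :=
  exists g, tspan P g /\ Beq f g.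

Definition Bspan_eq (P1 P2 : tv n F -> Prop) : Prop :=
  forall f, Bspan P1 f <-> Bspan P2 f.

(* bracketings: binary trees with leaves the generators *)
Inductive btree := BLeaf of 'I_n | BNode of btree & btree.

Fixpoint leaves (t : btree) : seq 'I_n :=
  match t with BLeaf i => [:: i] | BNode a b => leaves a ++ leaves b end.

(* [x, y] = y x - p_{yx} x y, p_{yx} = chi(deg y, deg x) *)
Fixpoint ev_br (t : btree) : tv n F :=
  match t with
  | BLeaf i => tgen i
  | BNode a b =>
      tsub (tmul (ev_br b) (ev_br a))
           (tscale (chi (leaves b) (leaves a)) (tmul (ev_br a) (ev_br b)))
  end.

Fixpoint ev_comm (t : btree) : tv n F :=
  match t with
  | BLeaf i => tgen i
  | BNode a b => tsub (tmul (ev_comm a) (ev_comm b)) (tmul (ev_comm b) (ev_comm a))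
  end.

Definition is_br (f : tv n F) : Prop := exists t, f = ev_br t.
Definition is_comm (f : tv n F) : Prop := exists t, f = ev_comm t.
Definition is_gen (f : tv n F) : Prop := exists i, f = tgen i.

Definition LV := Bspan is_br.
Definition LmV := Bspan is_comm.
Definition VB := Bspan is_gen.

Definition Bsub_eq (A B : tv n F -> Prop) : Prop := forall f, A f <-> B f.

End TensorAlg.

(* Main.v *)
Require Import Defs.
From HB Require Import structures.
From mathcomp Require Import all_boot all_order all_algebra all_fingroup.
From mathcomp Require Import zify ring.
From Stdlib Require Import ClassicalEpsilon.
Set Implicit Arguments. Unset Strict Implicit. Unset Printing Implicit Defensive.
Import GRing.Theory.
Local Open Scope ring_scope.
Section Gen.
Variables (F : fieldType) (n : nat) (q : 'I_n -> 'I_n -> F).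

Definition Wt (v : seq 'I_n) (s : 'S_(size v)) : F :=
  let t := in_tuple v in
  let wl := fun a : 'I_(size v) => tnth t (s a) in
  \prod_(a : 'I_(size v)) \prod_(b : 'I_(size v) | (a < b)%N && (s b < s a)%N)
          q (wl a) (wl b).

Definition ps (v : seq 'I_n) (s : 'S_(size v)) : seq 'I_n :=
  [seq tnth (in_tuple v) (s a) | a <- enum 'I_(size v)].

Arguments Wt : clear implicits.
Arguments ps : clear implicits.
Lemma OmegaE (f : tv n F) v : Omega q f v = \sum_(s : 'S_(size v)) Wt v s * f (ps v s).
Proof. by []. Qed.

Lemma Omega_lin m (c : 'I_m -> F) (h : 'I_m -> tv n F) (g : tv n F) :
  (forall w, g w = \sum_(k < m) c k * h k w) ->
  forall v, Omega q g v = \sum_(k < m) c k * Omega q (h k) v.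
Proof.
move=> Hg v; rewrite OmegaE.
under eq_bigr do rewrite Hg mulr_sumr.
rewrite exchange_big; apply: eq_bigr => k _.
rewrite OmegaE mulr_sumr; apply: eq_bigr => s _; by rewrite mulrCA.
Qed.

Lemma Omega_ext (f g : tv n F) : (forall w, f w = g w) -> forall v, Omega q f v = Omega q g v.
Proof. by move=> H v; rewrite !OmegaE; apply: eq_bigr => s _; rewrite H. Qed.

Definition hom (l : seq 'I_n) (f : tv n F) := forall w, ~~ perm_eq w l -> f w = 0.

Lemma hom_gen i : hom [:: i] (tgen F i).
Proof.
move=> w Hw; rewrite /tgen; case: eqP => // E; by rewrite E perm_refl in Hw.
Qed.

Lemma hom_mul l1 l2 f g : hom l1 f -> hom l2 g -> hom (l1 ++ l2) (tmul f g).
Proof.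
move=> Hf Hg w Hw; rewrite /tmul; apply: big1 => k _.
case P1: (perm_eq (take k w) l1); last by rewrite Hf ?P1 // mul0r.
case P2: (perm_eq (drop k w) l2); last by rewrite Hg ?P2 // mulr0.
by move: Hw; have -> : perm_eq w (l1 ++ l2) by rewrite -[w](cat_take_drop k) (perm_cat P1 P2).
Qed.

Lemma hom_sub l f g : hom l f -> hom l g -> hom l (tsub f g).
Proof. by move=> Hf Hg w Hw; rewrite /tsub Hf // Hg // subr0. Qed.

Lemma hom_scale l c f : hom l f -> hom l (tscale c f).
Proof. by move=> Hf w Hw; rewrite /tscale Hf // mulr0. Qed.

Lemma hom_br t : hom (leaves t) (ev_br q t).
Proof.
elim: t => [i|a Ha b Hb] /=; first exact: hom_gen.
apply: hom_sub; last by apply: hom_scale; apply: hom_mul.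
move=> w Hw; apply: (hom_mul Hb Ha); apply: contra Hw => H.
by rewrite (perm_trans H) // perm_catC.
Qed.

Lemma hom_comm t : hom (leaves t) (ev_comm F t).
Proof.
elim: t => [i|a Ha b Hb] /=; first exact: hom_gen.
apply: hom_sub; first by apply: hom_mul.
move=> w Hw; apply: (hom_mul Hb Ha); apply: contra Hw => H.
by rewrite (perm_trans H) // perm_catC.
Qed.

Lemma leaves_gt0 (t : btree n) : (0 < size (leaves t))%N.
Proof. by elim: t => //= a Ha b _; rewrite size_cat addn_gt0 Ha. Qed.

Lemma leaves2 (t : btree n) : size (leaves t) = 2%N -> exists a b, t = BNode (BLeaf a) (BLeaf b).
Proof.
case: t => [i|a b] //= ; rewrite size_cat.
case: a => [a|a1 a2]; case: b => [b|b1 b2] //= ; try by move=> _; exists a, b.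
all: rewrite ?size_cat.
all: try have := leaves_gt0 b1; try have := leaves_gt0 b2;
  try have := leaves_gt0 a1; try have := leaves_gt0 a2; lia.
Qed.

End Gen.
Arguments Wt {F n} q v s.
Arguments ps {n} v s.


Section P2.
Variables (F : fieldType) (n : nat) (q : 'I_n -> 'I_n -> F).

Lemma ord2 (x : 'I_2) : x = ord0 \/ x = ord_max.
Proof. case: x => [[|[|m]] Hm]; [left|right|by []]; exact: val_inj. Qed.

Lemma perm2 (s : 'S_2) : s = 1%g \/ s = tperm ord0 ord_max.
Proof.
have Hi := @perm_inj _ s.
have D : s ord0 != s ord_max by apply/eqP => /Hi.
case: (ord2 (s ord0)) => E0; case: (ord2 (s ord_max)) => E1;
  rewrite E0 E1 in D => //; [left|right]; apply/permP => x;
  case: (ord2 x) => ->; by rewrite ?perm1 ?tpermL ?tpermR.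
Qed.

Lemma omega2 (f : tv n F) a b : Omega q f [:: a; b] = f [:: a; b] + q b a * f [:: b; a].
Proof.
rewrite OmegaE /= (bigD1 1%g) //= (bigD1 (tperm ord0 ord_max)) //=; last first.
  by apply/eqP => /permP /(_ ord0); rewrite perm1 tpermL.
rewrite big1 ?addr0; last first.
  by move=> s /andP[/negPf A /negPf B]; case: (perm2 s) => E; rewrite E eqxx in A B.
have L1 : lift ord0 ord0 = ord_max :> 'I_2 by apply: val_inj.
have W1 : Wt q [:: a; b] 1 = 1.
  rewrite /Wt; apply: big1 => x _; apply: big_pred0 => y; rewrite !perm1.
  by apply/negbTE; apply/negP => /andP[] /ltn_trans H /H; rewrite ltnn.
have P1 : ps [:: a; b] 1 = [:: a; b].
  by rewrite /ps !enum_ordSl enum_ord0 /= !perm1.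
have P2 : ps [:: a; b] (tperm ord0 ord_max) = [:: b; a].
  by rewrite /ps !enum_ordSl enum_ord0 /= L1 tpermL tpermR.
have W2 : Wt q [:: a; b] (tperm ord0 ord_max) = q b a.
  rewrite /Wt /= !big_ord_recl !big_ord0 L1 tpermL tpermR /= !big_mkcond /= !big_ord_recl !big_ord0 /= ?L1 ?tpermL ?tpermR /=.
  rewrite big1 ?mul1r ?mulr1 //; move=> y /andP[]; by case: (ord2 y) => ->.
by rewrite W1 P1 P2 W2 mul1r.
Qed.

Lemma tmul_gen2 (a b x y : 'I_n) :
  tmul (tgen F a) (tgen F b) [:: x; y] = ((x == a) && (y == b))%:R :> F.
Proof.
rewrite /tmul /= !big_ord_recl big_ord0 /= /tgen /=.
rewrite !eqseq_cons /= !andbT !mul0r !mulr0 add0r addr0.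
by rewrite addr0; case: (x == a); case: (y == b); rewrite ?mulr1 ?mulr0 ?mul0r.
Qed.

Lemma br2 (a b x y : 'I_n) :
  ev_br q (BNode (BLeaf a) (BLeaf b)) [:: x; y] =
  ((x == b) && (y == a))%:R - q b a * ((x == a) && (y == b))%:R.
Proof. by rewrite /= /tsub /tscale !tmul_gen2 /chi !big_seq1. Qed.

Lemma comm2 (a b x y : 'I_n) :
  ev_comm F (BNode (BLeaf a) (BLeaf b)) [:: x; y] =
  ((x == a) && (y == b))%:R - ((x == b) && (y == a))%:R.
Proof. by rewrite /= /tsub !tmul_gen2. Qed.

Lemma perm_swap2 (x y : 'I_n) l : perm_eq [:: x; y] l = perm_eq [:: y; x] l.
Proof. exact: (perm_catC [:: x] [:: y] l). Qed.

Lemma perm2_size (x y : 'I_n) l : perm_eq [:: x; y] l -> size l = 2%N.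
Proof. by move/perm_size <-. Qed.

Lemma comm_anti (t : btree n) x y :
  ev_comm F t [:: x; y] = - ev_comm F t [:: y; x].
Proof.
case P: (perm_eq [:: x; y] (leaves t)); last first.
  rewrite !hom_comm ?oppr0 ?P //; by rewrite -perm_swap2 P.
have [a [b ->]] := leaves2 (perm2_size P).
rewrite !comm2 opprB; congr (_ - _); by rewrite andbC.
Qed.

Lemma comm_diag (t : btree n) x : ev_comm F t [:: x; x] = 0.
Proof.
case P: (perm_eq [:: x; x] (leaves t)); last by rewrite hom_comm ?P.
have [a [b ->]] := leaves2 (perm2_size P).
by rewrite comm2 andbC subrr.
Qed.

Lemma span_comm_anti g x y : tspan (@is_comm F n) g -> g [:: x; y] = - g [:: y; x].
Proof.
case=> m [c [h [Hk Hg]]]; rewrite !Hg -sumrN; apply: eq_bigr => k _.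
by case: (Hk k) => t ->; rewrite comm_anti mulrN.
Qed.

Lemma span_comm_diag g x : tspan (@is_comm F n) g -> g [:: x; x] = 0.
Proof.
case=> m [c [h [Hk Hg]]]; rewrite !Hg; apply: big1 => k _.
by case: (Hk k) => t ->; rewrite comm_diag mulr0.
Qed.

Lemma br_omega (t : btree n) x y : q x y * q y x = 1 ->
  Omega q (ev_br q t) [:: x; y] = 0.
Proof.
move=> r1; rewrite omega2.
case P: (perm_eq [:: x; y] (leaves t)); last first.
  rewrite !hom_br ?mulr0 ?addr0 ?P //; by rewrite -perm_swap2 P.
have [a [b ->]] := leaves2 (perm2_size P).
rewrite !br2 [(y == b) && _]andbC [(y == a) && _]andbC.
case: (boolP ((x == b) && (y == a))) => E1; case: (boolP ((x == a) && (y == b))) => E2.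
- move: E1 E2 => /andP[/eqP E3 /eqP E4] /andP[/eqP E5 /eqP _]; subst => /=.
  transitivity (1 - q a a * q a a); [ring | by rewrite r1 subrr].
- move: E1 => /andP[/eqP E3 /eqP E4]; subst => /=.
  transitivity (1 - q b a * q a b); [ring | by rewrite r1 subrr].
- move: E2 => /andP[/eqP E3 /eqP E4]; subst => /=. ring.
- rewrite /=. ring.
Qed.




Lemma eq_ring (a b c d : F) : a = b -> c - d = a - b -> c = d.
Proof. by move=> -> /eqP; rewrite subrr subr_eq0 => /eqP. Qed.

Lemma LV_br t : LV q (ev_br q t).
Proof.
exists (ev_br q t); split => //; exists 1%N, (fun _ => 1), (fun _ => ev_br q t); split.
  by move=> k; exists t.
by move=> w; rewrite big_ord1 mul1r.
Qed.

Lemma LmV_comm t : LmV q (ev_comm F t).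
Proof.
exists (ev_comm F t); split => //; exists 1%N, (fun _ => 1), (fun _ => ev_comm F t); split.
  by move=> k; exists t.
by move=> w; rewrite big_ord1 mul1r.
Qed.

Lemma diag_cond (H : Bsub_eq (LV q) (LmV q)) i : q i i ^+ 2 = 1.
Proof.
have [g [Hs Hb]] := (H _).1 (LV_br (BNode (BLeaf i) (BLeaf i))).
have := Hb [:: i; i]; rewrite !omega2 !br2 (span_comm_diag i Hs) eqxx /= => E.
apply/eqP; rewrite eq_sym; apply/eqP; apply: (eq_ring E); ring.
Qed.

Lemma offR (H : Bsub_eq (LV q) (LmV q)) i j : i != j -> q i j * q j i != 1 -> q i j = 1.
Proof.
move=> ij r1.
have ji : j != i by rewrite eq_sym.
have [g [Hs Hb]] := (H _).1 (LV_br (BNode (BLeaf j) (BLeaf i))).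
have := Hb [:: i; j]; have := Hb [:: j; i].
rewrite !omega2 !br2 (span_comm_anti j i Hs) !eqxx (negbTE ij) (negbTE ji) /= => E2 E1.
set c := g [:: i; j] in E1 E2.
have E2' : c * (q i j - 1) = 0 by apply: (eq_ring (esym E2)); ring.
have E1' : 1 - q i j * q j i = c * (1 - q j i) by apply: (eq_ring E1); ring.
move/eqP: E2'; rewrite mulf_eq0 => /orP[/eqP c0|]; last by rewrite subr_eq0 => /eqP.
by move: r1; rewrite -subr_eq0 -oppr_eq0 opprB E1' c0 mul0r eqxx.
Qed.

Lemma off_cond (H : Bsub_eq (LV q) (LmV q)) i j : i != j -> q j i = 1.
Proof.
move=> ij.
have r1 : q i j * q j i = 1.
  apply/eqP; apply: contraT => r1.
  have ji : j != i by rewrite eq_sym.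
  have E1 := offR H ij r1.
  have E2 : q j i = 1 by apply: (offR H ji); rewrite mulrC.
  by move: r1; rewrite E1 E2 mulr1 eqxx.
have [h [Hs Hb]] := (H _).2 (LmV_comm (BNode (BLeaf i) (BLeaf j))).
have := Hb [:: i; j].
have -> : Omega q h [:: i; j] = 0.
  case: Hs => m [c [hk [Hk Hg]]]; rewrite (Omega_lin q Hg); apply: big1 => k _.
  by case: (Hk k) => t ->; rewrite br_omega ?mulr0.
rewrite omega2 !comm2 !eqxx (negbTE ij) (eq_sym j i) (negbTE ij) /= => E.
apply/eqP; rewrite eq_sym; apply/eqP; apply: (eq_ring E); ring.
Qed.

End P2.

Section P3.
Variables (F : fieldType) (n : nat) (q : 'I_n -> 'I_n -> F).
Hypothesis hchar : [pchar F] =i pred0.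
Hypothesis Hd : forall i, q i i ^+ 2 = 1.
Hypothesis Ho : forall i j, i != j -> q i j = 1.

Section Word.
Variable v : seq 'I_n.
Local Notation m := (size v).
Local Notation L z := (tnth (in_tuple v) z).
Definition Q (z z' : 'I_m) := q (L z) (L z').

Definition G (s : 'S_m) (b : 'I_m -> 'I_m -> bool) (xy : 'I_m * 'I_m) :=
  if (s^-1%g xy.1 < s^-1%g xy.2)%N && b xy.1 xy.2 then Q xy.1 xy.2 else 1.

Lemma W2E s : Wt q v s = \prod_(xy : 'I_m * 'I_m) G s (fun x y => y < x)%N xy.
Proof.
rewrite /Wt; under eq_bigr do rewrite big_mkcond.
rewrite pair_big /=.
have inj : injective (fun xy : 'I_m * 'I_m => (s xy.1, s xy.2)).
  by move=> [a b] [c d] /= [/perm_inj -> /perm_inj ->].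
rewrite [RHS](reindex_inj inj) /=; apply: eq_bigr => -[a b] _.
by rewrite /G /= !permK /Q.
Qed.


Section Swap.
Variables (p p' : 'I_m) (i : 'I_n).
Hypotheses (Hpp : (p < p')%N) (Lp : L p = i) (Lp' : L p' = i)
  (Hbet : forall z : 'I_m, (p < z)%N -> (z < p')%N -> L z != i) (Hi : q i i = -1).

Lemma Ltp z : L (tperm p p' z) = L z.
Proof. by case: tpermP => // ->; rewrite Lp Lp'. Qed.

Lemma key (z : 'I_m) : L z = i -> z <> p -> z <> p' -> (z < p)%N || (p' < z)%N.
Proof.
move=> Lz n1 n2.
have h1 : (z : nat) <> p by move=> /val_inj.
have h2 : (z : nat) <> p' by move=> /val_inj.
move: (@Hbet z); rewrite Lz eqxx => H.
case: (ltnP z p) => //= H1; apply: contraT; rewrite -leqNgt => H2.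
have := H; lia.
Qed.

Lemma Wswap s : Wt q v (s * tperm p p')%g = - Wt q v s.
Proof.
set t := tperm p p'.
have E1 : Wt q v (s * t)%g = \prod_xy G s (fun x y => t y < t x)%N xy.
  rewrite W2E.
  have inj : injective (fun xy : 'I_m * 'I_m => (t xy.1, t xy.2)).
    by move=> [a b] [c d] /= [/perm_inj -> /perm_inj ->].
  rewrite (reindex_inj inj) /=; apply: eq_bigr => -[x y] _.
  by rewrite /G /= invMg tpermV !permM !tpermK /Q !Ltp.
rewrite E1 W2E.
have ne : (p', p) != (p, p') by apply/eqP => -[E _]; move: Hpp; rewrite E ltnn.
rewrite (bigD1 (p,p')) //= (bigD1 (p',p)) //=.
rewrite [in RHS](bigD1 (p,p')) //= [in RHS](bigD1 (p',p)) //=.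
have -> : \prod_(xy | (xy != (p, p')) && (xy != (p', p))) G s (fun x y => t y < t x)%N xy
   = \prod_(xy | (xy != (p, p')) && (xy != (p', p))) G s (fun x y => y < x)%N xy.
  { apply: eq_bigr => -[x y] /andP[N1 N2]; rewrite /G /=.
  case: (eqVneq (Q x y) 1) => [->|Qn]; first by case: ifP; case: ifP.
  have Lxy : L x = L y.
    apply/eqP; apply: contraNT Qn => /Ho H; by rewrite /Q H.
  suff -> : (t y < t x)%N = (y < x)%N by [].
  rewrite /t; case: tpermP => [Ex|Ex|nx1 nx2]; case: tpermP => [Ey|Ey|ny1 ny2]; try subst x; try subst y.
  all: try by rewrite !ltnn.
  all: try by rewrite eqxx in N1.
  all: try by rewrite eqxx in N2.
  all: try by [].
  all: rewrite ?Lp ?Lp' in Lxy.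
  all: first [have := key Lxy ny1 ny2 | have := key Lxy nx1 nx2 | have := key (esym Lxy) ny1 ny2 | have := key (esym Lxy) nx1 nx2]; move: Hpp; lia. }
rewrite /G /= /t tpermL tpermR /Q Lp Lp' Hi [(p' < p)%N]ltnNge (ltnW Hpp) Hpp /= !andbT !andbF.
case: ltngtP => H.
- by rewrite mulN1r mul1r mul1r.
- by rewrite mulN1r !mul1r opprK.
- by move: Hpp => /ltn_eqF; rewrite (perm_inj (val_inj H)) eqxx.
Qed.


Lemma ps_swap s : ps v (s * tperm p p')%g = ps v s.
Proof. by rewrite /ps; apply: eq_map => a; rewrite permM Ltp. Qed.

Lemma OmegaB0 (f : tv n F) : Omega q f v = 0.
Proof.
rewrite OmegaE; set X := \sum_s _.
have : X = - X.
  rewrite {1}/X (reindex_inj (mulIg (tperm p p'))) /= -sumrN.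
  by apply: eq_bigr => s _; rewrite Wswap ps_swap mulNr.
move/eqP; rewrite -addr_eq0 -mulr2n -mulr_natl mulf_eq0 => /orP[|/eqP //].
by rewrite ((pcharf0P F).1 hchar 2).
Qed.
End Swap.

Lemma OmegaB (x y : 'I_m) (f : tv n F) : x != y -> L x = L y -> q (L x) (L x) != 1 ->
  Omega q f v = 0.
Proof.
wlog xy : x y / (x < y)%N.
  move=> W nxy Lxy Q1; case: (ltngtP x y) => H.
  - exact: W H nxy Lxy Q1.
  - by apply: (W y x H); [rewrite eq_sym | rewrite Lxy | rewrite -Lxy].
  - by move: nxy; rewrite (val_inj H) eqxx.
move=> _ Lxy Q1.
set i := L x.
have Hi : q i i = -1.
  have : (q i i - 1) * (q i i + 1) = 0 by rewrite -subr_sqr Hd expr1n subrr.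
  move/eqP; rewrite mulf_eq0 subr_eq0 (negbTE Q1) /= addr_eq0 => /eqP //.
have Py : (x < y)%N && (L y == i) by rewrite xy /i Lxy eqxx.
case: (@arg_minnP _ y (fun z : 'I_m => (x < z)%N && (L z == i)) (fun z : 'I_m => nat_of_ord z) Py) => p' /andP[xp' Lp'] Hmin.
apply: (@OmegaB0 x p' i) => //; first exact/eqP.
move=> z xz zp'; apply/negP => Lz.
by have := Hmin z; rewrite xz Lz => /(_ isT); rewrite leqNgt zp'.
Qed.

Lemma WtA (NA : forall x y : 'I_m, x != y -> L x = L y -> q (L x) (L x) = 1) s :
  Wt q v s = 1.
Proof.
rewrite /Wt; apply: big1 => a _; apply: big1 => b /andP[ab _].
have nab : a != b by apply/eqP => E; move: ab; rewrite E ltnn.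
have sab : s a != s b by rewrite (inj_eq perm_inj).
case: (eqVneq (L (s a)) (L (s b))) => E; first by rewrite -E; apply: NA sab E.
exact: Ho.
Qed.

Lemma size_ps s : size (ps v s) = m.
Proof. by rewrite /ps size_map size_enum_ord. Qed.

Lemma nth_ps s (z : 'I_m) i0 : nth i0 (ps v s) z = L (s z).
Proof. by rewrite /ps (nth_map z) ?size_enum_ord // nth_ord_enum. Qed.

Lemma rot_perm k : exists r : 'S_m, forall s, ps v (r * s)%g = rot k (ps v s).
Proof.
have : perm_eq (rot k (enum 'I_m)) (ord_tuple m) by rewrite perm_rot.
case/tuple_permP => r Hr; exists r => s.
have Er : rot k (enum 'I_m) = map r (enum 'I_m).
  rewrite Hr /=; apply: eq_map => j; by rewrite tnth_ord_tuple.
  rewrite /ps -[RHS]map_rot Er -[RHS]map_comp; apply: eq_map => a; by rewrite /= permM.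
Qed.

Lemma tmulE (g h : tv n F) s :
  tmul g h (ps v s) = \sum_(k < m.+1) g (take k (ps v s)) * h (drop k (ps v s)).
Proof.
rewrite /tmul -(big_mkord xpredT (fun k => g (take k (ps v s)) * h (drop k (ps v s)))).
by rewrite size_ps big_mkord.
Qed.

Lemma rot_sum (g h : tv n F) :
  \sum_(s : 'S_m) tmul g h (ps v s) = \sum_(s : 'S_m) tmul h g (ps v s).
Proof.
under eq_bigr do rewrite tmulE.
under [RHS]eq_bigr do rewrite tmulE.
rewrite exchange_big [RHS]exchange_big [RHS](reindex_inj rev_ord_inj) /=.
apply: eq_bigr => k _.
have [r Hr] := rot_perm k.
rewrite [RHS](reindex_inj (mulgI r)) /=; apply: eq_bigr => s _.
have kle : (k <= m)%N by rewrite -ltnS.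
have Hs : size (drop k (ps v s)) = (m - k)%N by rewrite size_drop size_ps.
rewrite Hr /rot subSS take_size_cat // drop_size_cat //; exact: mulrC.
Qed.

Lemma OmegaA (NA : forall x y : 'I_m, x != y -> L x = L y -> q (L x) (L x) = 1)
  (f : tv n F) : Omega q f v = \sum_(s : 'S_m) f (ps v s).
Proof. by rewrite OmegaE; apply: eq_bigr => s _; rewrite WtA // mul1r. Qed.

Lemma node_A (NA : forall x y : 'I_m, x != y -> L x = L y -> q (L x) (L x) = 1)
  (a b : btree n) :
  Omega q (ev_br q (BNode a b)) v = 0 /\ Omega q (ev_comm F (BNode a b)) v = 0.
Proof.
split; rewrite OmegaA //=; rewrite /tsub /tscale sumrB; last first.
  by rewrite rot_sum subrr.
rewrite -mulr_sumr rot_sum.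
set chi0 := chi q (leaves b) (leaves a).
case: (boolP (all (fun i => all (fun j => q i j == 1) (leaves a)) (leaves b))) => Hall.
  have -> : chi0 = 1.
    rewrite /chi0 /chi big_seq; apply: big1 => i ib.
    rewrite big_seq; apply: big1 => j ja.
    by move/allP: Hall => /(_ i ib) /allP /(_ j ja) /eqP.
  by rewrite mul1r subrr.
move/allPn: Hall => [i ib /allPn [j ja qij]].
have ij : i = j by apply/eqP; apply: contraNT qij => /Ho ->.
subst j.
have Z : \sum_(s : 'S_m) tmul (ev_br q a) (ev_br q b) (ps v s) = 0.
  apply: big1 => s _; rewrite tmulE; apply: big1 => k _.
  case P1: (perm_eq (take k (ps v s)) (leaves a)); last by rewrite hom_br ?P1 // mul0r.
  case P2: (perm_eq (drop k (ps v s)) (leaves b)); last by rewrite (@hom_br _ _ q b) ?P2 // mulr0.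
  exfalso.
  have i1 : i \in take k (ps v s) by rewrite (perm_mem P1).
  have i2 : i \in drop k (ps v s) by rewrite (perm_mem P2).
  set u := ps v s in i1 i2.
  have hm : size u = m by rewrite /u size_ps.
  have hkm : (k <= m)%N by rewrite -ltnS.
  have h1 : (index i (take k u) < size (take k u))%N by rewrite index_mem.
  have e1 : nth i (take k u) (index i (take k u)) = i by rewrite nth_index.
  have hk : (size (take k u) <= k)%N by rewrite size_take; case: ifP => // /negbT; rewrite -leqNgt hm.
  have h2 : (index i (drop k u) < size (drop k u))%N by rewrite index_mem.
  have e2 : nth i (drop k u) (index i (drop k u)) = i by rewrite nth_index.
  rewrite size_drop hm in h2; rewrite nth_drop in e2; rewrite nth_take in e1; last by lia.
  have z1 : (index i (take k u) < m)%N by lia.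
  have z2 : (k + index i (drop k u) < m)%N by lia.
  have E1 : L (s (Ordinal z1)) = i by rewrite -(nth_ps s (Ordinal z1) i).
  have E2 : L (s (Ordinal z2)) = i by rewrite -(nth_ps s (Ordinal z2) i).
  have nz : s (Ordinal z1) != s (Ordinal z2).
    rewrite (inj_eq perm_inj); apply/eqP => /(congr1 val) /=; lia.
  have := NA _ _ nz (etrans E1 (esym E2)); rewrite E1 => H; by rewrite H eqxx in qij.
by rewrite Z mulr0 subr0.
Qed.



End Word.

Lemma node_zero (a b : btree n) v :
  Omega q (ev_br q (BNode a b)) v = 0 /\ Omega q (ev_comm F (BNode a b)) v = 0.
Proof.
case: (boolP [exists x : 'I_(size v), exists y : 'I_(size v),
   (x != y) && (tnth (in_tuple v) x == tnth (in_tuple v) y) &&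
   (q (tnth (in_tuple v) x) (tnth (in_tuple v) x) != 1)]).
- case/existsP => x /existsP [y /andP [/andP [xy /eqP Lxy] Q1]].
  by split; apply: (@OmegaB v x y _ xy Lxy Q1).
- move/existsPn => H; apply: node_A => x y xy Lxy; apply/eqP.
  by move: (H x) => /existsPn /(_ y); rewrite xy Lxy eqxx /= negbK.
Qed.

Fixpoint lf (t : btree n) : 'I_n := match t with BLeaf i => i | BNode a _ => lf a end.
Definition cf (t : btree n) : F := if t is BLeaf _ then 1 else 0.

Lemma LV_VB : Bsub_eq (LV q) (VB q).
Proof.
move=> f; split.
- case=> g [[m [c [h [Hk Hg]]]] Hb].
  pose Ht := fun k => constructive_indefinite_description _ (Hk k).
  pose T := fun k => proj1_sig (Ht k).
  exists (fun w => \sum_(k < m) (c k * cf (T k)) * tgen F (lf (T k)) w); split.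
    exists m, (fun k => c k * cf (T k)), (fun k => tgen F (lf (T k))); split => // k.
    by exists (lf (T k)).
  move=> v; rewrite Hb (Omega_lin q Hg) (Omega_lin q (fun w => erefl)).
  apply: eq_bigr => k _; rewrite (proj2_sig (Ht k)) -/(T k).
  case: (T k) => [i|a b] /=; first by rewrite mulr1.
  by rewrite (node_zero a b v).1 !mulr0 ?mul0r.
- case=> g [[m [c [h [Hk Hg]]]] Hb]; exists g; split => //.
  exists m, c, h; split => // k; case: (Hk k) => i ->; by exists (BLeaf i).
Qed.

Lemma LmV_VB : Bsub_eq (LmV q) (VB q).
Proof.
move=> f; split.
- case=> g [[m [c [h [Hk Hg]]]] Hb].
  pose Ht := fun k => constructive_indefinite_description _ (Hk k).
  pose T := fun k => proj1_sig (Ht k).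
  exists (fun w => \sum_(k < m) (c k * cf (T k)) * tgen F (lf (T k)) w); split.
    exists m, (fun k => c k * cf (T k)), (fun k => tgen F (lf (T k))); split => // k.
    by exists (lf (T k)).
  move=> v; rewrite Hb (Omega_lin q Hg) (Omega_lin q (fun w => erefl)).
  apply: eq_bigr => k _; rewrite (proj2_sig (Ht k)) -/(T k).
  case: (T k) => [i|a b] /=; first by rewrite mulr1.
  by rewrite (node_zero a b v).2 !mulr0 ?mul0r.
- case=> g [[m [c [h [Hk Hg]]]] Hb]; exists g; split => //.
  exists m, c, h; split => // k; case: (Hk k) => i ->; by exists (BLeaf i).
Qed.

End P3.


Theorem proposition6p3 (F : closedFieldType) (n : nat) (q : 'I_n -> 'I_n -> F)
  (hchar : [pchar F] =i pred0) (hq : forall i j, q i j != 0) :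
  (Bsub_eq (LV q) (LmV q) <->
     ((forall i, q i i ^+ 2 = 1) /\
      (forall i j, i != j -> q i j = 1 /\ q j i = 1)))
  /\
  (Bsub_eq (LV q) (LmV q) -> Bsub_eq (LV q) (VB q) /\ Bsub_eq (LmV q) (VB q)).
Proof.
have fwd : Bsub_eq (LV q) (LmV q) ->
    (forall i, q i i ^+ 2 = 1) /\ (forall i j, i != j -> q i j = 1 /\ q j i = 1).
  move=> H; split; first exact: diag_cond H.
  move=> i j ij; split; last exact: (@off_cond _ _ q H i j ij).
  by apply: (@off_cond _ _ q H j i); rewrite eq_sym.
have bwd : (forall i, q i i ^+ 2 = 1) -> (forall i j, i != j -> q i j = 1 /\ q j i = 1) ->
    Bsub_eq (LV q) (VB q) /\ Bsub_eq (LmV q) (VB q).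
  move=> Hd Ho'; have Ho : forall i j, i != j -> q i j = 1 by move=> i j /Ho' [].
  split; [exact: (LV_VB hchar Hd Ho) | exact: (LmV_VB hchar Hd Ho)].
split.
  split; first exact: fwd.
  case=> Hd Ho; have [A B] := bwd Hd Ho.
  by move=> f; rewrite (A f) (B f).
move=> H; have [Hd Ho] := fwd H; exact: bwd.
Qed.
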